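(* Let $n\ge 2$, let $2\le k\le n$, and let $\alpha_k,\alpha_{k+1},\ldots,\alpha_n\in\mathbb{C}$. Let $\mathbf{A}$ and $\mathbf{B}$ be two cyclic Leibniz algebras over $\mathbb{C}$ of dimension $n$. Assume $\mathbf{A}$ has a cyclic generator $a$ satisfying $$aa^n=\alpha_k a^k+\alpha_{k+1}a^{k+1}+\cdots+\alpha_n a^n.$$ Then $\mathbf{A}$ is isomorphic to $\mathbf{B}$ (as algebras) if and only if $\mathbf{B}$ has a cyclic generator $b$ satisfying $$bb^n=\alpha_k b^k+\alpha_{k+1}b^{k+1}+\cdots+\alpha_n b^n.$$
   Context: A (left) Leibniz algebra is a vector space with a bilinear product such that left multiplication by every element is a derivation: $x(yz)=(xy)z+y(xz)$ for all $x,y,z$. A cyclic Leibniz algebra is a Leibniz algebra generated (as an algebra) by a single element. For an element $x$ one sets $x^1=x$ and $x^{j+1}=x\,x^j$ (left multiplication by $x$ applied $j$ times to $x$). An element $x$ of an $n$-dimensional cyclic Leibniz algebra is called a cyclic generator (or generator) if $\{x,x^2,\ldots,x^n\}$ is a basis of the algebra. *)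

(* Defs.v *)
From HB Require Import structures.
From mathcomp Require Import all_boot all_order all_algebra.
From mathcomp Require Import reals.
From mathcomp Require Import complex.
Set Implicit Arguments. Unset Strict Implicit. Unset Printing Implicit Defensive.
Import Order.TTheory GRing.Theory Num.Theory.
Local Open Scope ring_scope.

(* The complex numbers, built as R[i] over a model R of the reals
   (any realType is a complete archimedean ordered field, i.e. is R). *)
Definition CC (R : realType) : fieldType := (complex R : numClosedFieldType).

Section Leibniz.
Variables (F : fieldType) (V : vectType F).

Definition bilinear_prod (mul : V -> V -> V) : Prop :=
  (forall (c : F) (x y z : V), mul (c *: x + y) z = c *: mul x z + mul y z) /\
  (forall (c : F) (x y z : V), mul x (c *: y + z) = c *: mul x y + mul x z).

Definition left_leibniz (mul : V -> V -> V) : Prop :=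
  forall x y z : V, mul x (mul y z) = mul (mul x y) z + mul y (mul x z).

Definition leibniz_algebra (mul : V -> V -> V) : Prop :=
  bilinear_prod mul /\ left_leibniz mul.

Definition lpow (mul : V -> V -> V) (x : V) (j : nat) : V :=
  iter j.-1 (mul x) x.

Definition generates (mul : V -> V -> V) (x : V) : Prop :=
  forall U : {vspace V}, x \in U ->
    (forall u v, u \in U -> v \in U -> mul u v \in U) -> U = fullv.

Definition cyclic_algebra (mul : V -> V -> V) : Prop :=
  exists x : V, generates mul x.

Definition cyclic_generator (mul : V -> V -> V) (n : nat) (x : V) : Prop :=
  basis_of fullv (mkseq (fun i => lpow mul x i.+1) n).

End Leibniz.

Definition alg_iso (F : fieldType) (V W : vectType F)
  (mulV : V -> V -> V) (mulW : W -> W -> W) (f : V -> W) : Prop :=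
  (forall (c : F) (x y : V), f (c *: x + y) = c *: f x + f y) /\
  bijective f /\
  (forall x y : V, f (mulV x y) = mulW (f x) (f y)).

Definition isomorphic (F : fieldType) (V W : vectType F)
  (mulV : V -> V -> V) (mulW : W -> W -> W) : Prop :=
  exists f : V -> W, alg_iso mulV mulW f.

(* Main.v *)
Require Import Defs.
From HB Require Import structures.
From mathcomp Require Import all_boot all_order all_algebra.
From mathcomp Require Import reals complex.
Import GRing.Theory.
Set Implicit Arguments. Unset Strict Implicit.
Local Open Scope ring_scope.

Section Lin.
Variables (F : fieldType) (U U' : lmodType F) (f : U -> U').
Hypothesis hf : forall c x y, f (c *: x + y) = c *: f x + f y.
Lemma lin0 : f 0 = 0.
Proof. by have := hf (-1) 0 0; rewrite scaler0 add0r scaleN1r addNr. Qed.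
Lemma linD x y : f (x + y) = f x + f y.
Proof. by have := hf 1 x y; rewrite !scale1r. Qed.
Lemma linZ c x : f (c *: x) = c *: f x.
Proof. by have := hf c x 0; rewrite !addr0 lin0 addr0. Qed.
Lemma linsum (I : Type) (r : seq I) (P : pred I) g :
  f (\sum_(i <- r | P i) g i) = \sum_(i <- r | P i) f (g i).
Proof. exact: (big_morph f linD lin0). Qed.
End Lin.

Section Gen.
Variables (F : fieldType) (V : vectType F) (mul : V -> V -> V).
Hypothesis bil : bilinear_prod mul.
Hypothesis leib : left_leibniz mul.

Lemma linl z : forall c x y, mul (c *: x + y) z = c *: mul x z + mul y z.
Proof. by move=> c x y; apply: bil.1. Qed.
Lemma linr x : forall c y z, mul x (c *: y + z) = c *: mul x y + mul x z.
Proof. by move=> c y z; apply: bil.2. Qed.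

Lemma lpowS x i : lpow mul x i.+2 = mul x (lpow mul x i.+1).
Proof. by []. Qed.

Lemma lpow_zero x i z : mul (lpow mul x i.+2) z = 0.
Proof.
elim: i z => [|i IH] z.
  have := leib x x z; rewrite /lpow /= => h.
  by apply: (addIr (mul x (mul x z))); rewrite add0r -h.
have := leib x (lpow mul x i.+2) z; rewrite IH (lin0 (linr x)) IH addr0.
by rewrite -lpowS => <-.
Qed.
End Gen.

Lemma tupE (F : fieldType) (V : vectType F) (mul : V -> V -> V) x n :
  ([tuple lpow mul x i.+1 | i < n] : seq V) = mkseq (fun i => lpow mul x i.+1) n.
Proof.
apply: (@eq_from_nth _ 0); first by rewrite size_tuple size_mkseq.
move=> i; rewrite size_tuple => lt.
by rewrite nth_mkseq // -(tnth_nth 0 _ (Ordinal lt)) tnth_mktuple.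
Qed.

Lemma tup_nth (F : fieldType) (V : vectType F) (mul : V -> V -> V) x n i :
  (i < n)%N -> [tuple lpow mul x i.+1 | i < n]`_i = lpow mul x i.+1.
Proof. by move=> lt; rewrite tupE nth_mkseq. Qed.

Definition lmap (F : fieldType) (V W : vectType F) n (TA : n.-tuple V)
  (TB : n.-tuple W) (v : V) : W := \sum_(i < n) coord TA i v *: TB`_i.

Section LMap.
Variables (F : fieldType) (V W : vectType F) (n : nat).
Variables (TA : n.-tuple V) (TB : n.-tuple W).

Lemma lmap_lin c x y : lmap TA TB (c *: x + y) = c *: lmap TA TB x + lmap TA TB y.
Proof.
rewrite /lmap scaler_sumr -big_split; apply: eq_bigr => i _.
by rewrite linearP /= scalerDl scalerA.
Qed.

Lemma lmap_sum c : free TA ->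
  lmap TA TB (\sum_(i < n) c i *: TA`_i) = \sum_(i < n) c i *: TB`_i.
Proof. by move=> fr; apply: eq_bigr => i _; rewrite coord_sum_free. Qed.

Lemma lmap_nth (m : 'I_n) : free TA -> lmap TA TB TA`_m = TB`_m.
Proof.
move=> fr; rewrite /lmap (bigD1 m) //= coord_free // eqxx scale1r big1 ?addr0 //.
by move=> i /negPf ne; rewrite coord_free // eq_sym ne scale0r.
Qed.

End LMap.

Lemma lmapK (F : fieldType) (V W : vectType F) n (TA : n.-tuple V) (TB : n.-tuple W) : basis_of fullv TA -> free TB -> cancel (lmap TA TB) (lmap TB TA).
Proof.
move=> bA fB v; rewrite [lmap TA TB v]/lmap lmap_sum //.
by rewrite -(coord_basis bA (memvf v)).
Qed.

Section Back.
Variables (F : fieldType) (V W : vectType F) (mulA : V -> V -> V) (mulB : W -> W -> W).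
Hypotheses (bilA : bilinear_prod mulA) (leibA : left_leibniz mulA).
Hypotheses (bilB : bilinear_prod mulB) (leibB : left_leibniz mulB).
Variables (n k : nat) (alpha : nat -> F) (a : V) (b : W).
Hypothesis k1 : (1 <= k)%N.
Hypothesis ga : cyclic_generator mulA n a.
Hypothesis gb : cyclic_generator mulB n b.
Hypothesis ra : mulA a (lpow mulA a n) = \sum_(k <= i < n.+1) alpha i *: lpow mulA a i.
Hypothesis rb : mulB b (lpow mulB b n) = \sum_(k <= i < n.+1) alpha i *: lpow mulB b i.

Let TA := [tuple lpow mulA a i.+1 | i < n].
Let TB := [tuple lpow mulB b i.+1 | i < n].
Let bA : basis_of fullv TA. Proof. by rewrite /TA tupE. Qed.
Let bB : basis_of fullv TB. Proof. by rewrite /TB tupE. Qed.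
Let f := lmap TA TB.

Let fpow m : (m < n)%N -> f (lpow mulA a m.+1) = lpow mulB b m.+1.
Proof.
move=> lt; rewrite -(tup_nth mulA a lt) -(tup_nth mulB b lt).
exact: (lmap_nth TB (Ordinal lt) (basis_free bA)).
Qed.

Let flin : forall c x y, f (c *: x + y) = c *: f x + f y := lmap_lin TA TB.

Let fa v : f (mulA a v) = mulB b (f v).
Proof.
rewrite {1}(coord_basis bA (memvf v)) [f v]/f [lmap TA TB v]/lmap.
rewrite (linsum (linr bilA a)) (linsum flin) (linsum (linr bilB b)).
apply: eq_bigr => j _; rewrite (linZ (linr bilA a)) (linZ flin) (linZ (linr bilB b)).
congr (_ *: _); rewrite !tup_nth //.
have [lt|] := ltnP j.+1 n.
  by rewrite -lpowS fpow.
move=> nj; have := ltn_ord j => jn.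
have -> : j.+1 = n by apply/eqP; rewrite eqn_leq jn.
rewrite ra rb (linsum flin); apply: eq_big_nat => i /andP[ki ilt].
rewrite (linZ flin); case: i ki ilt => [|m] ki ilt; first by move: (leq_trans k1 ki).
by rewrite fpow.
Qed.

Lemma back_iso : isomorphic mulA mulB.
Proof.
exists f; split; first exact: flin.
split.
  exists (lmap TB TA); [exact: lmapK (basis_free bB) | exact: lmapK (basis_free bA)].
move=> u v.
rewrite {1}(coord_basis bA (memvf u)) [f u]/f [lmap TA TB u]/lmap.
rewrite (linsum (linl bilA v)) (linsum flin) (linsum (linl bilB _)).
apply: eq_bigr => i _; rewrite (linZ (linl bilA v)) (linZ flin) (linZ (linl bilB _)).
congr (_ *: _); rewrite !tup_nth //.
case: i => [[|j] lt] /=; first exact: fa.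
by rewrite !lpow_zero // (lin0 flin).
Qed.
End Back.

Section Fwd.
Variables (F : fieldType) (V W : vectType F) (mulA : V -> V -> V) (mulB : W -> W -> W).
Variables (n k : nat) (alpha : nat -> F) (a : V).
Hypothesis ga : cyclic_generator mulA n a.
Hypothesis ra : mulA a (lpow mulA a n) = \sum_(k <= i < n.+1) alpha i *: lpow mulA a i.
Variable f : V -> W.
Hypothesis fi : alg_iso mulA mulB f.

Let flin := fi.1.
Let fmul := fi.2.2.
Let finj : injective f. Proof. exact: bij_inj fi.2.1. Qed.

Let fpow m : f (lpow mulA a m) = lpow mulB (f a) m.
Proof.
case: m => [|m] //=; rewrite /lpow /=.
by elim: m => [|m IH] //=; rewrite fmul IH.
Qed.

Lemma fwd_gen : \dim (fullv : {vspace W}) = n ->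
  cyclic_generator mulB n (f a) /\
  mulB (f a) (lpow mulB (f a) n) = \sum_(k <= i < n.+1) alpha i *: lpow mulB (f a) i.
Proof.
move=> dW; split; last first.
  rewrite -fpow -fmul ra (linsum flin); apply: eq_bigr => i _.
  by rewrite (linZ flin) fpow.
have bA : basis_of fullv [tuple lpow mulA a i.+1 | i < n] by rewrite tupE.
rewrite /cyclic_generator -tupE basisEfree subvf size_tuple dW leqnn andbT.
rewrite andbT; apply/freeP => c.
have -> : \sum_(i < n) c i *: [tuple lpow mulB (f a) i.+1 | i < n]`_i
   = f (\sum_(i < n) c i *: [tuple lpow mulA a i.+1 | i < n]`_i).
  rewrite (linsum flin); apply: eq_bigr => i _.
  by rewrite (linZ flin) !tup_nth // fpow.
rewrite -(lin0 flin) => /finj h.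
move: (basis_free bA) => /freeP; apply; exact: h.
Qed.
End Fwd.

Theorem lemma3p1 (R : realType) (n k : nat) (alpha : nat -> CC R)
  (V W : vectType (CC R)) (mulA : V -> V -> V) (mulB : W -> W -> W) :
  (2 <= n)%N -> (2 <= k <= n)%N ->
  leibniz_algebra mulA -> cyclic_algebra mulA -> \dim (fullv : {vspace V}) = n ->
  leibniz_algebra mulB -> cyclic_algebra mulB -> \dim (fullv : {vspace W}) = n ->
  forall a : V, cyclic_generator mulA n a ->
    mulA a (lpow mulA a n) = \sum_(k <= i < n.+1) alpha i *: lpow mulA a i ->
  (isomorphic mulA mulB <->
   exists b : W, cyclic_generator mulB n b /\
     mulB b (lpow mulB b n) = \sum_(k <= i < n.+1) alpha i *: lpow mulB b i).
Proof.
move=> n2 /andP[k2 kn] [bilA leibA] _ dV [bilB leibB] _ dW a ga ra; split.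
  by move=> [f fi]; exists (f a); exact: (fwd_gen ga ra fi dW).
move=> [b [gb rb]].
apply: (@back_iso _ _ _ mulA mulB bilA leibA bilB leibB n k alpha a b _ ga gb ra rb).
exact: leq_trans k2.
Qed.
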